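(* Let $K$ be a $b$-complete idempotent semifield and $V$ an idempotent $b$-space over $K$. (i) Every $a$-linear functional defined on a $b$-subspace $W$ of $V$ extends to an $a$-linear functional on $V$. (ii) If $x,y\in V$ and $x\neq y$, then there is an $a$-linear functional $f$ on $V$ with $f(x)\neq f(y)$.
   Context: An idempotent semigroup is a set with a commutative, associative, idempotent operation $\oplus$, ordered by $x\preceq y$ iff $x\oplus y=y$; $\oplus X$, $\wedge X$ are least upper/greatest lower bounds. $b$-complete: every bounded above subset (including $\emptyset$) has a least upper bound; $a$-complete: every subset has least upper and greatest lower bounds; $\mathbf 0=\oplus\emptyset$. The normal completion $\widehat S$ is the completion by cuts. A homomorphism $f$ of $b$-complete semigroups is a $b$-homomorphism if $f(\oplus X)=\oplus f(X)$ for all bounded above $X$, an $a$-homomorphism if it is a $b$-homomorphism extending to a homomorphism of normal completions that preserves least upper bounds of all subsets. An idempotent semiring has commutative idempotent associative $\oplus$, associative $\odot$ distributing on both sides, unit $\mathbf 1$, zero $\mathbf 0$; it is $b$-complete if $b$-complete as a semigroup with $k\odot(\oplus X)=\oplus(k\odot X)$, $(\oplus X)\odot k=\oplus(X\odot k)$ for bounded $X$; a semifield if nonzero elements are invertible. An idempotent semimodule over $K$ is an idempotent semigroup with an associative, bi-distributive action of $K$ with $\mathbf 1\odot x=x$, $\mathbf 0\odot x=\mathbf 0$; it is $b$-complete if $b$-complete as a semigroup and $(\oplus Q)\odot x=\oplus(Q\odot x)$, $k\odot(\oplus X)=\oplus(k\odot X)$ for bounded $Q\subset K$, $X\subset V$;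 $a$-complete if moreover it has a greatest element $\infty$. For $b$-complete semifield $K$, an idempotent $b$-space is a $b$-complete semimodule with $(\wedge Q)\odot x=\wedge(Q\odot x)$ for all nonempty $Q\subset K$ and $x\neq\infty$. A map $p$ is linear if it preserves $\oplus$ and scalar multiplication; $b$-linear if it is moreover a $b$-homomorphism; $a$-linear if it moreover extends to an $a$-homomorphism of normal completions. A linear functional on $V$ is a linear map $V\to\widehat K$. A $b$-subspace of $V$ is a subsemigroup $W\subset V$ closed under multiplication by elements of $K$ such that the embedding $W\to V$ extends to a $b$-linear mapping. *)

(* Defs.v *)
Set Implicit Arguments.
Unset Strict Implicit.

Section Order.
Variables (T : Type) (le : T -> T -> Prop).

Definition ub (X : T -> Prop) (u : T) := forall x, X x -> le x u.
Definition lb (X : T -> Prop) (u : T) := forall x, X x -> le u x.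
Definition is_lub (X : T -> Prop) (s : T) := ub X s /\ forall u, ub X u -> le s u.
Definition is_glb (X : T -> Prop) (s : T) := lb X s /\ forall u, lb X u -> le u s.
Definition bounded_above (X : T -> Prop) := exists u, ub X u.
Definition is_top (x : T) := forall y, le y x.

Definition ubD (D X : T -> Prop) (u : T) := D u /\ ub X u.
Definition is_lubD (D X : T -> Prop) (s : T) :=
  ubD D X s /\ forall u, ubD D X u -> le s u.

(* normal completion (completion by cuts) of the poset (D, le) :
   its elements are the cuts A = (A^u)^l, ordered by inclusion *)
Definition up (D A : T -> Prop) (x : T) := D x /\ forall a, A a -> le a x.
Definition low (D A : T -> Prop) (x : T) := D x /\ forall a, A a -> le x a.
Definition is_cut (D A : T -> Prop) := forall x, A x <-> low D (up D A) x.
Definition cut_sup (D : T -> Prop) (F : (T -> Prop) -> Prop) : T -> Prop :=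
  low D (up D (fun x => exists A, F A /\ A x)).
Definition principal (D : T -> Prop) (x : T) : T -> Prop :=
  fun y => D y /\ le y x.
End Order.

Definition full {T : Type} : T -> Prop := fun _ => True.
Definition image {A B : Type} (f : A -> B) (X : A -> Prop) : B -> Prop :=
  fun y => exists x, X x /\ y = f x.
Definition ceq {T : Type} (A B : T -> Prop) := forall x, A x <-> B x.

Definition sle {T : Type} (add : T -> T -> T) (x y : T) := add x y = y.

Record idem_semiring := IdemSemiring {
  kcar :> Type;
  kadd : kcar -> kcar -> kcar;
  kmul : kcar -> kcar -> kcar;
  k0 : kcar;
  k1 : kcar;
  kaddC : forall x y, kadd x y = kadd y x;
  kaddA : forall x y z, kadd x (kadd y z) = kadd (kadd x y) z;
  kaddI : forall x, kadd x x = x;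
  kadd0 : forall x, kadd k0 x = x;
  kmulA : forall x y z, kmul x (kmul y z) = kmul (kmul x y) z;
  kmul1l : forall x, kmul k1 x = x;
  kmul1r : forall x, kmul x k1 = x;
  kmul0l : forall x, kmul k0 x = k0;
  kmul0r : forall x, kmul x k0 = k0;
  kmulDl : forall x y z, kmul (kadd x y) z = kadd (kmul x z) (kmul y z);
  kmulDr : forall x y z, kmul z (kadd x y) = kadd (kmul z x) (kmul z y)
}.

Definition kle (K : idem_semiring) : K -> K -> Prop := sle (@kadd K).
Arguments kle K : clear implicits.

Definition b_complete_sg {T : Type} (add : T -> T -> T) :=
  forall X : T -> Prop, bounded_above (sle add) X -> exists s, is_lub (sle add) X s.

Definition b_complete_semiring (K : idem_semiring) :=
  b_complete_sg (@kadd K) /\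
  (forall (X : K -> Prop) (s k : K), is_lub (kle K) X s ->
     is_lub (kle K) (image (kmul k) X) (kmul k s)) /\
  (forall (X : K -> Prop) (s k : K), is_lub (kle K) X s ->
     is_lub (kle K) (image (fun x => kmul x k) X) (kmul s k)).

Definition semifield (K : idem_semiring) :=
  forall x : K, x <> k0 K -> exists y, kmul x y = k1 K /\ kmul y x = k1 K.

Record semimodule (K : idem_semiring) := Semimodule {
  vcar :> Type;
  vadd : vcar -> vcar -> vcar;
  v0 : vcar;
  smul : K -> vcar -> vcar;
  vaddC : forall x y, vadd x y = vadd y x;
  vaddA : forall x y z, vadd x (vadd y z) = vadd (vadd x y) z;
  vaddI : forall x, vadd x x = x;
  vadd0 : forall x, vadd v0 x = x;
  smulA : forall a b x, smul (kmul a b) x = smul a (smul b x);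
  smulDl : forall a b x, smul (kadd a b) x = vadd (smul a x) (smul b x);
  smulDr : forall a x y, smul a (vadd x y) = vadd (smul a x) (smul a y);
  smul1 : forall x, smul (k1 K) x = x;
  smul0 : forall x, smul (k0 K) x = v0
}.

Definition vle (K : idem_semiring) (V : semimodule K) : V -> V -> Prop :=
  sle (@vadd K V).
Arguments vle {K} V.

Definition b_complete_semimodule (K : idem_semiring) (V : semimodule K) :=
  b_complete_sg (@vadd K V) /\
  (forall (Q : K -> Prop) (q : K) (x : V), is_lub (kle K) Q q ->
     is_lub (vle V) (image (fun k => smul k x) Q) (smul q x)) /\
  (forall (X : V -> Prop) (s : V) (k : K), is_lub (vle V) X s ->
     is_lub (vle V) (image (smul k) X) (smul k s)).

Definition b_space (K : idem_semiring) (V : semimodule K) :=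
  b_complete_semimodule V /\
  forall (Q : K -> Prop) (q : K) (x : V),
    (exists k, Q k) -> is_glb (kle K) Q q -> ~ is_top (vle V) x ->
    is_glb (vle V) (image (fun k => smul k x) Q) (smul q x).

Definition khat_join (K : idem_semiring) (A B : K -> Prop) : K -> Prop :=
  low (kle K) full (up (kle K) full (fun z => A z \/ B z)).
Definition khat_scale (K : idem_semiring) (k : K) (A : K -> Prop) : K -> Prop :=
  low (kle K) full (up (kle K) full (image (kmul k) A)).

Section Functionals.
Variables (K : idem_semiring) (V : semimodule K).

Definition linear_on (D : V -> Prop) (f : V -> K -> Prop) :=
  (forall x, D x -> is_cut (kle K) full (f x)) /\
  (forall x y, D x -> D y -> ceq (f (vadd x y)) (khat_join (f x) (f y))) /\
  (forall (k : K) x, D x -> ceq (f (smul k x)) (khat_scale k (f x))).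

Definition b_linear_on (D : V -> Prop) (f : V -> K -> Prop) :=
  linear_on D f /\
  forall (X : V -> Prop) (s : V), (forall x, X x -> D x) ->
    is_lubD (vle V) D X s ->
    ceq (f s) (cut_sup (kle K) full (image f X)).

(* a-linear: b-linear, and extends (along the canonical embedding) to a map
   of normal completions D^ -> K^ preserving least upper bounds of all
   subsets *)
Definition a_linear_on (D : V -> Prop) (f : V -> K -> Prop) :=
  b_linear_on D f /\
  exists F : (V -> Prop) -> (K -> Prop),
    (forall A, is_cut (vle V) D A -> is_cut (kle K) full (F A)) /\
    (forall x, D x -> ceq (F (principal (vle V) D x)) (f x)) /\
    (forall FA : (V -> Prop) -> Prop,
       (forall A, FA A -> is_cut (vle V) D A) ->
       ceq (F (cut_sup (vle V) D FA)) (cut_sup (kle K) full (image F FA))).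

Definition b_subspace (W : V -> Prop) :=
  (forall x y, W x -> W y -> W (vadd x y)) /\
  (forall (k : K) x, W x -> W (smul k x)) /\
  (forall X : V -> Prop, (forall x, X x -> W x) ->
     (exists u, ubD (vle V) W X u) -> exists s, is_lubD (vle V) W X s) /\
  (forall (X : V -> Prop) (s : V), (forall x, X x -> W x) ->
     is_lubD (vle V) W X s -> is_lub (vle V) X s).
End Functionals.

(* Main.v *)
Require Import Defs.
From Stdlib Require Import Classical FunctionalExtensionality PropExtensionality.
Set Implicit Arguments.

Section Gen.
Variable K : idem_semiring.
Variable V : semimodule K.

Notation "a <=k b" := (kle K a b) (at level 70).
Notation "a <=v b" := (vle V a b) (at level 70).

Lemma kle_refl a : a <=k a. Proof. unfold kle, sle. apply kaddI. Qed.
Lemma kle_trans a b c : a <=k b -> b <=k c -> a <=k c.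
Proof. unfold kle, sle. intros H1 H2. rewrite <- H2, kaddA, H1. reflexivity. Qed.
Lemma kle_antisym a b : a <=k b -> b <=k a -> a = b.
Proof. unfold kle, sle. intros H1 H2. rewrite <- H1. rewrite kaddC. symmetry; exact H2. Qed.
Lemma kle0 a : k0 K <=k a. Proof. unfold kle, sle. apply kadd0. Qed.
Lemma kmul_monol k a b : a <=k b -> kmul k a <=k kmul k b.
Proof. unfold kle, sle. intro H. rewrite <- kmulDr, H. reflexivity. Qed.
Lemma kmul_monor k a b : a <=k b -> kmul a k <=k kmul b k.
Proof. unfold kle, sle. intro H. rewrite <- kmulDl, H. reflexivity. Qed.

Lemma vle_refl a : a <=v a. Proof. unfold vle, sle. apply vaddI. Qed.
Lemma vle_trans a b c : a <=v b -> b <=v c -> a <=v c.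
Proof. unfold vle, sle. intros H1 H2. rewrite <- H2, vaddA, H1. reflexivity. Qed.
Lemma vle_antisym a b : a <=v b -> b <=v a -> a = b.
Proof. unfold vle, sle. intros H1 H2. rewrite <- H1. rewrite vaddC. symmetry; exact H2. Qed.
Lemma vle0 a : v0 V <=v a. Proof. unfold vle, sle. apply vadd0. Qed.
Lemma smul_monor k a b : a <=v b -> smul k a <=v smul k b.
Proof. unfold vle, sle. intro H. rewrite <- smulDr, H. reflexivity. Qed.
Lemma smul_monol x a b : a <=k b -> smul a x <=v smul b x.
Proof. unfold vle, sle, kle, sle. intro H. rewrite <- smulDl, H. reflexivity. Qed.

Lemma lowF (U : K -> Prop) x : low (kle K) full U x <-> (forall a, U a -> x <=k a).
Proof. split; [intros [_ H]; exact H | intros H; split; [exact I | exact H]]. Qed.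
Lemma upF (U : K -> Prop) x : up (kle K) full U x <-> (forall a, U a -> a <=k x).
Proof. split; [intros [_ H]; exact H | intros H; split; [exact I | exact H]]. Qed.

Definition goodQ (Q : K -> Prop) :=
  (forall u u', Q u -> u <=k u' -> Q u') /\
  ((exists u, Q u) -> exists m, Q m /\ forall u, Q u -> m <=k u).

Lemma cut_lowF U : is_cut (kle K) full (low (kle K) full U).
Proof. intro x. rewrite lowF, lowF. split.
 - intros H b Hb. rewrite upF in Hb. apply Hb. rewrite lowF. exact H.
 - intros H a Ha. apply H. rewrite upF. intros c Hc. rewrite lowF in Hc. apply Hc; exact Ha.
Qed.

Lemma bound_char Q (HQ : goodQ Q) b :
  (forall a, low (kle K) full Q a -> a <=k b) -> Q b \/ (forall c, c <=k b).
Proof. intros H. destruct HQ as [Hup Hmin]. destruct (classic (exists u, Q u)) as [Hex|Hne].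
 - left. destruct (Hmin Hex) as [m [Hm Hmm]]. apply (Hup m). exact Hm. apply H. rewrite lowF. exact Hmm.
 - right. intro c. apply H. rewrite lowF. intros a Ha. exfalso; apply Hne; exists a; exact Ha.
Qed.

Lemma sup_low (I : Type) (S : I -> Prop) (Pi : I -> K -> Prop)
  (Hg : forall i, S i -> goodQ (Pi i)) :
  ceq (low (kle K) full (up (kle K) full (fun k => exists i, S i /\ low (kle K) full (Pi i) k)))
      (low (kle K) full (fun u => forall i, S i -> Pi i u)).
Proof. intro k. rewrite !lowF. split.
 - intros H u Hu. apply H. rewrite upF. intros a [i [Si Ha]]. rewrite lowF in Ha. apply Ha. apply Hu; exact Si.
 - intros H b Hb. rewrite upF in Hb. destruct (classic (forall c, c <=k b)) as [Ht|Hnt].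
   + apply Ht.
   + apply H. intros i Si. destruct (@bound_char (Pi i) (Hg i Si) b) as [Hq|Ht].
     * intros a Ha. apply Hb. exists i; split; assumption.
     * exact Hq.
     * contradiction.
Qed.

Lemma good_all (HKb1 : b_complete_sg (@kadd K)) (I : Type) (S : I -> Prop) (Pi : I -> K -> Prop)
  (Hg : forall i, S i -> goodQ (Pi i)) : goodQ (fun u => forall i, S i -> Pi i u).
Proof. split.
 - intros u u' Hu Huu' i Si. destruct (Hg i Si) as [Hup _]. exact (Hup u u' (Hu i Si) Huu').
 - intros [u Hu]. set (M := fun m => exists i, S i /\ Pi i m /\ forall v, Pi i v -> m <=k v).
   destruct (HKb1 M) as [m [Hmub Hmlub]].
   { exists u. intros a [i [Si [_ Ha]]]. apply Ha. apply Hu; exact Si. }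
   exists m. split.
   + intros i Si. destruct (Hg i Si) as [Hup Hmin]. destruct Hmin as [mi [Hmi Hmimin]].
     { exists u; apply Hu; exact Si. }
     apply (Hup mi). exact Hmi. apply Hmub. exists i. repeat split; assumption.
   + intros v Hv. apply Hmlub. intros a [i [Si [_ Ha]]]. apply Ha. apply Hv; exact Si.
Qed.

Lemma inv_nonzero (k k' : K) : k <> k0 K -> kmul k k' = k1 K -> k' <> k0 K.
Proof. intros Hk H E. subst k'. rewrite kmul0r in H. apply Hk.
  rewrite <- (kmul1r k), <- H, kmul0r. reflexivity. Qed.

Section GenA.
Variable HKb1 : b_complete_sg (@kadd K).
Variable HKf : semifield K.
Variable P : V -> K -> Prop.
Hypothesis P1 : forall (S : V -> Prop) x u,
  (forall z, (forall s, S s -> s <=v z) -> x <=v z) -> (forall s, S s -> P s u) -> P x u.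
Hypothesis P2 : forall x, goodQ (P x).
Hypothesis P3 : forall k x u, k <> k0 K -> P x u -> P (smul k x) (kmul k u).

Lemma Panti x y u : x <=v y -> P y u -> P x u.
Proof. intros Hxy Hy. apply (P1 (fun s => s = y)).
  - intros z Hz. apply (vle_trans Hxy). apply Hz. reflexivity.
  - intros s ->. exact Hy. Qed.

Lemma Pk k k' x u : k <> k0 K -> kmul k k' = k1 K -> kmul k' k = k1 K ->
  (P (smul k x) u <-> P x (kmul k' u)).
Proof. intros Hk H1 H2. split.
  - intro H. assert (Hk' := inv_nonzero Hk H1). generalize (P3 Hk' H).
    rewrite <- smulA, H2, smul1. trivial.
  - intro H. generalize (P3 Hk H). rewrite kmulA, H1, kmul1l. trivial.
Qed.

Lemma gen_alinear : a_linear_on full (fun x => low (kle K) full (P x)).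
Proof.
  assert (Pall0 : forall u, P (v0 V) u).
  { intro u. apply (P1 (fun _ => False)). intros; apply vle0. intros s []. }
  split; [split; [split; [|split] |] |].
  - intros x _. apply cut_lowF.
  - intros x y _ _. unfold khat_join.
    assert (Heq : (fun z => low (kle K) full (P x) z \/ low (kle K) full (P y) z) =
                  (fun k => exists i, (i = x \/ i = y) /\ low (kle K) full (P i) k)).
    { apply functional_extensionality; intro k; apply propositional_extensionality; split.
      - intros [H|H]; [exists x | exists y]; auto.
      - intros [i [[->| ->] H]]; auto. }
    rewrite Heq. intro k. cbv beta.
    transitivity (low (kle K) full (fun u => forall i, (i = x \/ i = y) -> P i u) k).
    + rewrite !lowF. split; intros H a Ha; apply H.
      * apply (P1 (fun i => i = x \/ i = y)).
        -- intros z Hz. unfold vle, sle. rewrite <- vaddA. rewrite (Hz y (or_intror eq_refl)).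
           apply (Hz x (or_introl eq_refl)).
        -- exact Ha.
      * intros i [->| ->].
        -- apply (Panti (y := vadd x y)); [|exact Ha]. unfold vle, sle. rewrite vaddA, vaddI. reflexivity.
        -- apply (Panti (y := vadd x y)); [|exact Ha]. unfold vle, sle. rewrite (vaddC x y), vaddA, vaddI. reflexivity.
    + symmetry. apply sup_low. intros; apply P2.
  - intros k x _. cbv beta. unfold khat_scale.
    destruct (classic (k = k0 K)) as [Hk|Hk].
    + subst k. rewrite smul0. intro c. rewrite !lowF. split.
      * intros H b Hb. rewrite upF in Hb. apply H. apply Pall0.
      * intros H u _. apply H. rewrite upF. intros a [a0 [_ ->]]. rewrite kmul0l. apply kle0.
    + destruct (HKf Hk) as [k' [H1 H2]].
      assert (Himg : forall a, image (kmul k) (low (kle K) full (P x)) a <-> low (kle K) full (P (smul k x)) a).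
      { intro a. rewrite lowF. split.
        - intros [a0 [Ha0 ->]] u Hu. rewrite lowF in Ha0. rewrite (@Pk k k' x u Hk H1 H2) in Hu.
          rewrite <- (kmul1l u), <- H1, <- kmulA. apply kmul_monol. apply Ha0. exact Hu.
        - intros Ha. exists (kmul k' a). split.
          + rewrite lowF. intros u Hu. rewrite <- (kmul1l u), <- H2, <- kmulA.
            apply kmul_monol. apply Ha. apply P3; assumption.
          + rewrite kmulA, H1, kmul1l. reflexivity. }
      intro c. rewrite (cut_lowF (P (smul k x)) c). rewrite !lowF. split.
      * intros H b Hb. apply H. rewrite upF in *. intros a Ha. apply Hb. apply Himg. exact Ha.
      * intros H b Hb. apply H. rewrite upF in *. intros a Ha. apply Hb. apply Himg. exact Ha.
  - intros X s _ [[_ Hub] Hlub]. unfold cut_sup.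
    assert (Heq : (fun k => exists A, image (fun x => low (kle K) full (P x)) X A /\ A k) =
                  (fun k => exists i, X i /\ low (kle K) full (P i) k)).
    { apply functional_extensionality; intro k; apply propositional_extensionality; split.
      - intros [A [[i [Xi ->]] Ak]]. exists i; auto.
      - intros [i [Xi Hi]]. exists (low (kle K) full (P i)). split; [exists i; auto | exact Hi]. }
    rewrite Heq. intro k.
    transitivity (low (kle K) full (fun u => forall i, X i -> P i u) k).
    + rewrite !lowF. split; intros H a Ha; apply H.
      * apply (P1 X). intros z Hz. apply Hlub. split; [exact I | exact Hz]. exact Ha.
      * intros i Xi. apply (Panti (y := s)). apply Hub; exact Xi. exact Ha.
    + symmetry. apply sup_low. intros; apply P2.
  - exists (fun A => low (kle K) full (fun u => forall x, A x -> P x u)).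
    split; [|split].
    + intros A _. apply cut_lowF.
    + intros x _ k. rewrite !lowF. split; intros H a Ha; apply H.
      * intros y [_ Hy]. apply (Panti Hy Ha).
      * apply Ha. split; [exact I | apply vle_refl].
    + intros FA _. unfold cut_sup at 2.
      assert (Heq : (fun k => exists A, image (fun A => low (kle K) full (fun u => forall x, A x -> P x u)) FA A /\ A k) =
                    (fun k => exists A, FA A /\ low (kle K) full (fun u => forall x, A x -> P x u) k)).
      { apply functional_extensionality; intro k; apply propositional_extensionality; split.
        - intros [B [[A [FAA ->]] Bk]]. exists A; auto.
        - intros [A [FAA HA]]. eexists. split; [exists A; split; [exact FAA | reflexivity] | exact HA]. }
      rewrite Heq. intro k.
      transitivity (low (kle K) full (fun u => forall A, FA A -> forall x, A x -> P x u) k).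
      * rewrite !lowF. split; intros H a Ha; apply H.
        -- intros x [_ Hx]. apply (P1 (fun b => exists A, FA A /\ A b)).
           ++ intros z Hz. apply Hx. split; [exact I | exact Hz].
           ++ intros s [A [FAA As]]. exact (Ha A FAA s As).
        -- intros A FAA x Ax. apply Ha. split; [exact I|]. intros b [_ Hb]. apply Hb. exists A; auto.
      * symmetry. apply sup_low. intros A _. apply good_all; [exact HKb1|]. intros; apply P2.
Qed.
End GenA.
End Gen.

Section Ext.
Variable K : idem_semiring.
Variable V : semimodule K.
Notation "a <=k b" := (kle K a b) (at level 70).
Notation "a <=v b" := (vle V a b) (at level 70).
Variable HKb1 : b_complete_sg (@kadd K).
Variable HKf : semifield K.
Variable Hglb : forall (Q : K -> Prop) (q : K) (x : V),
    (exists k, Q k) -> is_glb (kle K) Q q -> ~ is_top (vle V) x ->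
    is_glb (vle V) (image (fun k => smul k x) Q) (smul q x).
Variable W : V -> Prop.
Variable f : V -> K -> Prop.
Hypothesis HW : b_subspace W.
Hypothesis Hf : a_linear_on W f.

Lemma principal_cut (D : V -> Prop) x : D x -> is_cut (vle V) D (principal (vle V) D x).
Proof. intros Dx y. split.
  - intros [Dy Hy]. split; [exact Dy|]. intros b [Db Hb]. apply (vle_trans Hy). apply Hb. split; [exact Dx | apply vle_refl].
  - intros [Dy Hy]. split; [exact Dy|]. apply Hy. split; [exact Dx|]. intros a [_ Ha]; exact Ha.
Qed.

Definition R u w := W w /\ (forall c, f w c -> c <=k u).
Definition PP x u := forall z, (forall w, R u w -> w <=v z) -> x <=v z.

Lemma WS k w : W w -> W (smul k w).
Proof. destruct HW as [_ [H _]]. apply H. Qed.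

Lemma Rscale k u w : R u w -> R (kmul k u) (smul k w).
Proof. intros [Ww Hw]. split; [apply WS; exact Ww|].
  destruct Hf as [[[_ [_ Hsc]] _] _]. intros c Hc. apply (Hsc k w Ww c) in Hc.
  unfold khat_scale in Hc. rewrite lowF in Hc. apply Hc. rewrite upF. intros a [a0 [Ha0 ->]].
  apply kmul_monol. apply Hw; exact Ha0.
Qed.

Lemma clo u w : W w -> (forall y, W y -> (forall r, R u r -> r <=v y) -> w <=v y) ->
  forall c, f w c -> c <=k u.
Proof. intros Ww Hw c Hc.
  destruct Hf as [_ [F [HF1 [HF2 HF3]]]].
  set (FA := fun A => exists r, R u r /\ A = principal (vle V) W r).
  set (FA' := fun A => FA A \/ A = principal (vle V) W w).
  assert (HcutA : forall A, FA A -> is_cut (vle V) W A).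
  { intros A [r [[Wr _] ->]]. apply principal_cut; exact Wr. }
  assert (HcutA' : forall A, FA' A -> is_cut (vle V) W A).
  { intros A [HA| ->]. apply HcutA; exact HA. apply principal_cut; exact Ww. }
  assert (Heqc : cut_sup (vle V) W FA' = cut_sup (vle V) W FA).
  { unfold cut_sup. f_equal. apply functional_extensionality; intro b; apply propositional_extensionality.
    split.
    - intros [Db Hb]. split; [exact Db|]. intros a [A [FAA Aa]]. apply Hb. exists A. split; [left; exact FAA | exact Aa].
    - intros [Db Hb]. split; [exact Db|]. intros a [A [[FAA| ->] Aa]].
      + apply Hb. exists A; auto.
      + destruct Aa as [_ Haw]. apply (vle_trans Haw). apply Hw; [exact Db|].
        intros r Rr. apply Hb. exists (principal (vle V) W r). split.
        * exists r; auto.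
        * split; [exact (proj1 Rr) | apply vle_refl]. }
  assert (H1 : F (principal (vle V) W w) c) by (apply (HF2 w Ww); exact Hc).
  assert (H2 : F (cut_sup (vle V) W FA') c).
  { apply (HF3 FA' HcutA'). unfold cut_sup. rewrite lowF. intros b Hb. rewrite upF in Hb.
    apply Hb. exists (F (principal (vle V) W w)). split; [|exact H1].
    exists (principal (vle V) W w). split; [right; reflexivity | reflexivity]. }
  rewrite Heqc in H2. apply (HF3 FA HcutA) in H2. unfold cut_sup in H2. rewrite lowF in H2.
  apply H2. rewrite upF. intros a [B [[A [[r [Rr ->]] ->]] Ba]].
  apply (HF2 r (proj1 Rr)) in Ba. apply (proj2 Rr). exact Ba.
Qed.

Lemma PP1 : forall (S : V -> Prop) x u,
  (forall z, (forall s, S s -> s <=v z) -> x <=v z) -> (forall s, S s -> PP s u) -> PP x u.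
Proof. intros S x u Hx HS z Hz. apply Hx. intros s Ss. apply (HS s Ss z Hz). Qed.

Lemma PP3 : forall k x u, k <> k0 K -> PP x u -> PP (smul k x) (kmul k u).
Proof. intros k x u Hk Hx z Hz. destruct (HKf Hk) as [k' [H1 H2]].
  assert (Hxz : x <=v smul k' z).
  { apply Hx. intros w Rw. rewrite <- (smul1 w), <- H2, smulA. apply smul_monor. apply Hz. apply Rscale; exact Rw. }
  apply (smul_monor k) in Hxz. rewrite <- smulA, H1, smul1 in Hxz. exact Hxz.
Qed.

Lemma scale_bound a a' b b' z : kmul a a' = k1 K -> kmul a' a = k1 K ->
  kmul b b' = k1 K -> kmul b' b = k1 K ->
  (forall w, R a w -> w <=v z) -> forall w, R b w -> w <=v smul (kmul b a') z.
Proof. intros Ha1 Ha2 Hb1 Hb2 Hz w Rw.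
  assert (Rw' : R a (smul (kmul a b') w)).
  { replace a with (kmul (kmul a b') b) at 1. apply Rscale; exact Rw.
    rewrite <- kmulA, Hb2, kmul1r. reflexivity. }
  apply Hz in Rw'. apply (smul_monor (kmul b a')) in Rw'.
  rewrite <- smulA in Rw'. replace (kmul (kmul b a') (kmul a b')) with (k1 K) in Rw'.
  rewrite smul1 in Rw'. exact Rw'.
  rewrite !kmulA. rewrite <- (kmulA b a' a), Ha2, kmul1r, Hb1. reflexivity.
Qed.

Lemma PP2 : forall x, goodQ K (PP x).
Proof. intro x. split.
  - intros u u' Hu Huu' z Hz. apply Hu. intros w [Ww Hw]. apply Hz. split; [exact Ww|].
    intros c Hc. apply (kle_trans (Hw c Hc) Huu').
  - intros [u0 Hu0].
    set (L := fun c => forall u, PP x u -> c <=k u).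
    destruct (HKb1 (X:=L)) as [m [Hmub Hmlub]].
    { exists u0. intros c Hc. apply Hc; exact Hu0. }
    assert (HmU : forall u, PP x u -> m <=k u).
    { intros u Hu. apply Hmlub. intros c Hc. apply Hc; exact Hu. }
    exists m. split; [|exact HmU].
    destruct (classic (m = k0 K)) as [Hm0|Hm0].
    +
      destruct (classic (PP x (k0 K))) as [H0|H0]. { rewrite Hm0; exact H0. }
      intros z Hz. rewrite Hm0 in Hz.
      destruct (classic (exists u1, PP x u1 /\ exists z1, (forall w, R u1 w -> w <=v z1) /\ ~ is_top (vle V) z1))
        as [[u1 [Hu1 [z1 [Hz1 Hnt]]]]|HB].
      * assert (Hu1n : u1 <> k0 K) by (intro E; subst u1; contradiction).
        destruct (HKf Hu1n) as [u1' [E1 E2]].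
        set (Q := fun q => exists u, PP x u /\ q = kmul u u1').
        assert (Hg : is_glb (kle K) Q (k0 K)).
        { split. intros q _. apply kle0.
          intros c Hc.
          assert (Hcu : kmul c u1 <=k m).
          { apply (Hmub (kmul c u1)). intros u Hu.
            assert (Hc' : c <=k kmul u u1') by (apply Hc; exists u; auto).
            apply (kmul_monor u1) in Hc'. rewrite <- kmulA, E2, kmul1r in Hc'. exact Hc'. }
          rewrite Hm0 in Hcu. apply (kmul_monor u1') in Hcu.
          rewrite <- kmulA, E1, kmul1r, kmul0l in Hcu. exact Hcu. }
        assert (Hne : exists k, Q k) by (exists (kmul u1 u1'); exists u1; auto).
        destruct (Hglb Hne Hg Hnt) as [_ Hgr].
        assert (Hx0 : x <=v smul (k0 K) z1).
        { apply Hgr. intros y [q [[u [Hu ->]] ->]].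
          assert (Hun : u <> k0 K) by (intro E; subst u; contradiction).
          destruct (HKf Hun) as [u' [F1 F2]].
          apply Hu. exact (@scale_bound u1 u1' u u' z1 E1 E2 F1 F2 Hz1). }
        rewrite smul0 in Hx0. apply (vle_trans Hx0). apply vle0.
      * apply Hu0. intros w [Ww Hw]. apply Hz. split; [exact Ww|].
        intros c Hc. rewrite <- Hm0. apply Hmub. intros u Hu.
        apply (@clo u w Ww); [|exact Hc]. intros y Wy Hy.
        destruct (classic (is_top (vle V) y)) as [Ht|Hnt]. apply Ht.
        exfalso. apply HB. exists u. split; [exact Hu|]. exists y. auto.
    + destruct (HKf Hm0) as [m' [M1 M2]].
      intros z Hz. destruct (classic (is_top (vle V) z)) as [Ht|Hnt]. apply Ht.
      set (Q := fun q => exists u, PP x u /\ q = kmul u m').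
      assert (Hg : is_glb (kle K) Q (k1 K)).
      { split.
        - intros q [u [Hu ->]]. rewrite <- M1. apply kmul_monor. apply HmU; exact Hu.
        - intros c Hc.
          assert (Hcu : kmul c m <=k m).
          { apply (Hmub (kmul c m)). intros u Hu.
            assert (Hc' : c <=k kmul u m') by (apply Hc; exists u; auto).
            apply (kmul_monor m) in Hc'. rewrite <- kmulA, M2, kmul1r in Hc'. exact Hc'. }
          apply (kmul_monor m') in Hcu. rewrite <- kmulA, M1, kmul1r in Hcu. exact Hcu. }
      assert (Hne : exists k, Q k) by (exists (kmul u0 m'); exists u0; auto).
      destruct (Hglb Hne Hg Hnt) as [_ Hgr].
      rewrite <- (smul1 z). apply Hgr. intros y [q [[u [Hu ->]] ->]].
      assert (Hun : u <> k0 K).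
      { intro E. subst u. apply Hm0. apply kle_antisym. apply HmU; exact Hu. apply kle0. }
      destruct (HKf Hun) as [u' [F1 F2]].
      apply Hu. exact (@scale_bound m m' u u' z M1 M2 F1 F2 Hz).
Qed.

Lemma gw w : W w -> ceq (low (kle K) full (PP w)) (f w).
Proof. intros Ww c. destruct Hf as [[[Hcut _] _] _].
  rewrite (Hcut w Ww c). rewrite !lowF. split; intros H u Hu; apply H.
  - rewrite upF in Hu. intros z Hz. apply Hz. split; assumption.
  - rewrite upF. apply (@clo u w Ww). intros y Wy Hy. apply Hu. exact Hy.
Qed.

Theorem part1 : exists g : V -> K -> Prop,
       a_linear_on full g /\ forall w, W w -> ceq (g w) (f w).
Proof. exists (fun x => low (kle K) full (PP x)). split.
  - apply gen_alinear; [exact HKb1 | exact HKf | exact PP1 | exact PP2 | exact PP3].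
  - exact gw.
Qed.
End Ext.

Section Sep.
Variable K : idem_semiring.
Variable V : semimodule K.
Notation "a <=k b" := (kle K a b) (at level 70).
Notation "a <=v b" := (vle V a b) (at level 70).
Variable HKb1 : b_complete_sg (@kadd K).
Variable HKf : semifield K.
Variable Hglb : forall (Q : K -> Prop) (q : K) (x : V),
    (exists k, Q k) -> is_glb (kle K) Q q -> ~ is_top (vle V) x ->
    is_glb (vle V) (image (fun k => smul k x) Q) (smul q x).

Lemma sep x y : ~ x <=v y -> exists f : V -> K -> Prop, a_linear_on full f /\ ~ ceq (f x) (f y).
Proof. intro Hxy.
  destruct (classic (is_top (kle K) (k1 K))) as [Ht|Hnt].
  - assert (H1 : forall c, c <> k0 K -> c = k1 K).
    { intros c Hc. destruct (HKf Hc) as [c' [E1 E2]]. apply kle_antisym. apply Ht.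
      rewrite <- E1. rewrite <- (kmul1r c) at 2. apply kmul_monol. apply Ht. }
    set (P := fun z u => z <=v y \/ u = k1 K).
    exists (fun z => low (kle K) full (P z)). split.
    + apply gen_alinear; [exact HKb1 | exact HKf | | |].
      * intros S z u Hz HS. destruct (classic (u = k1 K)) as [E|E]. right; exact E.
        left. apply Hz. intros s Ss. destruct (HS s Ss) as [H|H]. exact H. contradiction.
      * intro z. split.
        -- intros u u' [H|H] Hu. left; exact H. right. subst u. apply kle_antisym. apply Ht. exact Hu.
        -- intros _. destruct (classic (z <=v y)) as [H|H].
           ++ exists (k0 K). split. left; exact H. intros; apply kle0.
           ++ exists (k1 K). split. right; reflexivity. intros u [H'|H']. contradiction. subst u. apply kle_refl.
      * intros k z u Hk Hz. rewrite (H1 k Hk), smul1, kmul1l. exact Hz.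
    + intro E. assert (Hy : low (kle K) full (P y) (k1 K)).
      { apply E. rewrite lowF. intros u [H|H]. contradiction. subst u. apply kle_refl. }
      rewrite lowF in Hy. assert (H10 : k1 K <=k k0 K) by (apply Hy; left; apply vle_refl).
      assert (E10 : k1 K = k0 K) by (apply kle_antisym; [exact H10 | apply kle0]).
      apply Hxy. rewrite <- (smul1 x), <- (smul1 y), E10, !smul0. apply vle_refl.
  - set (P := fun z u => z <=v smul u y).
    assert (HP2 : forall z, goodQ K (P z)).
    { intro z. split.
      - intros u u' H Hu. apply (vle_trans H). apply smul_monol. exact Hu.
      - intros [u0 Hu0]. set (L := fun c => forall u, P z u -> c <=k u).
        destruct (HKb1 (X:=L)) as [m [Hmub Hmlub]].
        { exists u0. intros c Hc. apply Hc; exact Hu0. }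
        assert (HmU : forall u, P z u -> m <=k u).
        { intros u Hu. apply Hmlub. intros c Hc. apply Hc; exact Hu. }
        exists m. split; [|exact HmU].
        assert (Hyt : ~ is_top (vle V) y) by (intro T; apply Hxy; apply T).
        assert (Hg : is_glb (kle K) (P z) m).
        { split. intros u Hu; apply HmU; exact Hu. intros c Hc. apply Hmub. exact Hc. }
        destruct (Hglb (ex_intro _ u0 Hu0) Hg Hyt) as [_ Hgr].
        apply Hgr. intros w [q [Hq ->]]. exact Hq. }
    exists (fun z => low (kle K) full (P z)). split.
    + apply gen_alinear; [exact HKb1 | exact HKf | | exact HP2 |].
      * intros S z u Hz HS. apply Hz. exact HS.
      * intros k z u Hk Hz. unfold P in *. rewrite smulA. apply smul_monor. exact Hz.
    + intro E. destruct (@bound_char K (P x) (HP2 x) (k1 K)) as [H|H].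
      * intros a Ha. apply E in Ha. rewrite lowF in Ha. apply Ha. unfold P. rewrite smul1. apply vle_refl.
      * apply Hxy. unfold P in H. rewrite smul1 in H. exact H.
      * apply Hnt. exact H.
Qed.
End Sep.

Theorem theorem7p3 (K : idem_semiring) (HKb : b_complete_semiring K)
  (HKf : semifield K) (V : semimodule K) (HV : b_space V) :
  (forall (W : V -> Prop) (f : V -> K -> Prop),
     b_subspace W -> a_linear_on W f ->
     exists g : V -> K -> Prop,
       a_linear_on full g /\ forall w, W w -> ceq (g w) (f w)) /\
  (forall x y : V, x <> y ->
     exists f : V -> K -> Prop, a_linear_on full f /\ ~ ceq (f x) (f y)).
Proof.
  destruct HKb as [HKb1 _]. destruct HV as [_ Hglb].
  split.
  - intros W f HW Hf. exact (@part1 K V HKb1 HKf Hglb W f HW Hf).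
  - intros x y Hne. destruct (classic (vle V x y)) as [H|H].
    + assert (H' : ~ vle V y x) by (intro H'; apply Hne; apply vle_antisym; assumption).
      destruct (@sep K V HKb1 HKf Hglb y x H') as [f [Hf Hn]].
      exists f. split; [exact Hf|]. intro E. apply Hn. intro k. symmetry. apply E.
    + exact (@sep K V HKb1 HKf Hglb x y H).
Qed.
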